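(* Let $P$ be a graph, let $S$ be as defined below, and let $R=V(P)\setminus(S\cup N(S))$. Assume that the induced subgraph $P[R]$ has no isolated vertices. Then (1) $P[R]$ has a spanning subgraph isomorphic to a disjoint union of edges and odd cycles; and (2) for every vertex $x\in R$, the graph $P[R\setminus\{x\}]$ has a spanning subgraph isomorphic to a disjoint union of edges and odd cycles.
   Context: All graphs are finite, simple and undirected. For $S\subseteq V(P)$, $N(S)=\bigcup_{v\in S}N(v)$ (open neighborhood), $N(\emptyset)=\emptyset$. Let $I(P)$ be the set of isolated vertices of $P$. $S$ is an independent set $S\subseteq V(P)\setminus I(P)$ that maximizes $|S|-|N(S)|$, chosen, among all maximizers, to maximize $|S|$ (possibly $S=\emptyset$). Then $S$, $N(S)$, $R$ partition $V(P)$. *)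

(* Defs.v *)
(* A simple graph is a symmetric irreflexive relation e on a finType T. *)
From mathcomp Require Import all_boot all_order all_algebra.
Set Implicit Arguments. Unset Strict Implicit. Unset Printing Implicit Defensive.

Section Graph.
Variables (T : finType) (e : rel T).

Definition nbhd (S : {set T}) : {set T} := [set y | [exists x in S, e x y]].

Definition isolated : {set T} := [set x | [forall y, ~~ e x y]].

Definition independent (S : {set T}) : bool :=
  [forall x in S, forall y in S, ~~ e x y].

Definition admissible (S : {set T}) : bool :=
  independent S && (S \subset ~: isolated).

Definition surplus (S : {set T}) : int := (#|S|%:Z - #|nbhd S|%:Z)%R.

Definition is_special_S (S : {set T}) : Prop :=
  admissible S /\
  forall S' : {set T}, admissible S' ->
    (surplus S' <= surplus S)%R /\ (surplus S' = surplus S -> #|S'| <= #|S|).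

Definition edge_or_odd_cycle (B : {set T}) : Prop :=
  exists s : seq T, [/\ uniq s, B = [set x in s] &
    (exists a b, s = [:: a; b] /\ e a b) \/
    [/\ odd (size s), 3 <= size s & cycle e s]].

(* the induced subgraph on U has a spanning subgraph isomorphic to a disjoint
   union of edges and odd cycles: U is partitioned into blocks, each spanning
   an edge or an odd cycle (the components of the spanning subgraph) *)
Definition has_edge_odd_cycle_cover (U : {set T}) : Prop :=
  exists P : {set {set T}}, partition P U /\
    forall B, B \in P -> edge_or_odd_cycle B.

End Graph.

(* Main.v *)
Require Import Defs.
From mathcomp Require Import all_boot all_order all_algebra zify.
Set Implicit Arguments. Unset Strict Implicit. Unset Printing Implicit Defensive.

Section Cov.
Variables (T : finType) (e : rel T) (e_irr : irreflexive e).
Definition good (P : {set {set T}}) := forall B, B \in P -> edge_or_odd_cycle e B.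

Lemma pairs n : forall (s : seq T), size s <= n -> uniq s -> ~~ odd (size s) ->
  sorted e s -> forall P D, partition P D -> good P -> [disjoint [set x in s] & D] ->
  exists P', partition P' ([set x in s] :|: D) /\ good P'.
Proof.
elim: n => [|n IH] [|a [|b t]] //=.
- move=> _ _ _ _ P D pP gP _; exists P; split => //.
  suff -> : [set x in [::]] :|: D = D by [].
  by apply/setP => x; rewrite !inE.
- move=> _ _ _ _ P D pP gP _; exists P; split => //.
  suff -> : [set x in [::]] :|: D = D by [].
  by apply/setP => x; rewrite !inE.
- move=> hs /andP [anin /andP [bnin ut]]; rewrite negbK => et /andP[eab pt] P D pP gP dD.
  have st : sorted e t by case: t pt {hs ut bnin anin et dD} => //= c t /andP[].
  have [P1 [pP1 gP1]] : exists P', partition P' ([set x in t] :|: D) /\ good P'.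
    apply: (IH t _ ut et st P D pP gP); first lia.
    rewrite disjoints_subset; apply/subsetP => x; rewrite inE => xt.
    move: dD; rewrite disjoints_subset => /subsetP /(_ x); rewrite !inE xt !orbT.
    by move=> /(_ isT).
  set B := [set x in [:: a; b]].
  have aB : a \in B by rewrite inE mem_head.
  have hB : B != set0 by apply/set0Pn; exists a.
  have dB : [disjoint B & [set x in t] :|: D].
    rewrite disjoints_subset; apply/subsetP => x; rewrite !inE => /orP[]/eqP ->.
      move: anin; rewrite inE negb_or => /andP[_ /negbTE ->] /=.
      move: dD; rewrite disjoints_subset => /subsetP /(_ a); rewrite !inE eqxx.
      by move=> /(_ isT).
    rewrite (negbTE bnin) /=.
    move: dD; rewrite disjoints_subset => /subsetP /(_ b); rewrite !inE eqxx orbT.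
    by move=> /(_ isT).
  exists (B |: P1); split.
    suff -> : [set x in [:: a, b & t]] :|: D = B :|: ([set x in t] :|: D).
      exact: partitionU1.
    by apply/setP => x; rewrite !inE !orbA.
  move=> C /setU1P [->|/gP1 //].
  exists [:: a; b]; split => //=; last by left; exists a, b.
    by move: anin; rewrite !inE negb_or andbT => /andP[].
Qed.

Variable g : T -> T.
Hypothesis g_inj : injective g.

Lemma cover_perm n : forall U : {set T}, #|U| <= n ->
  (forall x, x \in U -> g x \in U /\ e x (g x)) -> has_edge_odd_cycle_cover e U.
Proof.
elim: n => [|n IH] U hU hg.
  have -> : U = set0 by apply/eqP; rewrite -cards_eq0; lia.
  exists set0; split; first by rewrite partition_set0.
  by move=> B; rewrite inE.
case: (set_0Vmem U) => [->|[u uU]].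
  exists set0; split; first by rewrite partition_set0.
  by move=> B; rewrite inE.
set s := orbit g u.
set O := [set x in s].
have OU : O \subset U.
  apply/subsetP => x; rewrite inE => /trajectP [i _ ->].
  elim: i => [|i IHi] //=; exact: (hg _ IHi).1.
have uO : u \in O by rewrite inE -fconnect_orbit connect0.
set U' := U :\: O.
have hU' : #|U'| <= n.
  move: hU; rewrite /U' cardsDS //; have : 0 < #|O| by apply/card_gt0P; exists u.
  lia.
have hg' : forall x, x \in U' -> g x \in U' /\ e x (g x).
  move=> x; rewrite inE => /andP[xO xU]; have [gU exg] := hg x xU.
  split => //; rewrite inE gU andbT; apply: contra xO; rewrite !inE.
  rewrite -!fconnect_orbit => h.
  rewrite fconnect_sym //; apply: connect_trans (fconnect1 g x) _.
  by rewrite fconnect_sym.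
have [P' [pP' gP']] := IH U' hU' hg'.
have dO : [disjoint O & U'].
  by rewrite disjoints_subset; apply/subsetP => x; rewrite !inE => ->.
have UE : U = O :|: U'.
  apply/setP => x; rewrite !inE; case: (boolP (x \in s)) => //= xs.
  by have := subsetP OU x; rewrite inE xs => ->.
have us : uniq s by apply: orbit_uniq.
have cs : cycle e s.
  apply: (@sub_in_cycle _ (mem U) (frel g)).
  - by move=> x y xU _ /= /eqP <-; exact: (hg x xU).2.
  - by apply/allP => x xs; apply: (subsetP OU); rewrite inE.
  - exact: cycle_orbit.
have [t st] : exists t, s = u :: t.
  exists (traject g (g u) (order g u).-1).
  by rewrite /s /orbit -orderSpred.
have ht : size s != 1.
  rewrite st /=; apply/negP => /eqP [t0]; move: cs; rewrite st.
  have -> : t = [::] by case: t {st} t0.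
  by rewrite /= e_irr.
have hs0 : size s != 0 by rewrite st.
case: (boolP (odd (size s))) => hodd.
  exists (O |: P'); split.
    rewrite UE; apply: partitionU1 => //; apply/set0Pn; by exists u.
  move=> C /setU1P [->|/gP' //].
  exists s; split => //; right; split => //; lia.
rewrite UE.
have ss : sorted e s by move: cs; rewrite st /= rcons_path => /andP[].
have [P2 [pP2 gP2]] := @pairs (size s) s (leqnn _) us hodd ss P' U' pP' gP' dO.
by exists P2.
Qed.
End Cov.
Section HallS.
Variables (T : finType) (r : T -> T -> bool).
Definition NN (Y A : {set T}) := [set y in Y | [exists x in A, r x y]].

Lemma NN_sub Y A : NN Y A \subset Y.
Proof. by apply/subsetP=> y; rewrite inE => /andP[]. Qed.

Lemma cardD_ge (C D : {set T}) : #|C| - #|D| <= #|C :\: D|.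
Proof.
rewrite cardsD; have := subset_leq_card (subsetIr C D); lia.
Qed.

Lemma hall n : forall (X Y : {set T}), #|X| <= n ->
  (forall A : {set T}, A \subset X -> #|A| <= #|NN Y A|) ->
  exists f : T -> T, {in X &, injective f} /\
     (forall x, x \in X -> f x \in Y /\ r x (f x)).
Proof.
elim: n => [|n IH] X Y hX hH.
  have X0 : X = set0 by apply/eqP; rewrite -cards_eq0; lia.
  by exists id; split => [x y|x]; rewrite X0 inE.
case: (boolP [exists A : {set T}, [&& A \subset X, A != set0, A != X & #|NN Y A| <= #|A|]]).
  case/existsP => A /and4P [AX A0 AX' NA].
  have AXp : A \proper X by rewrite properEneq AX' AX.
  have cA := proper_card AXp.
  have [f1 [f1i f1p]] : exists f : T -> T, {in A &, injective f} /\
     (forall x, x \in A -> f x \in NN Y A /\ r x (f x)).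
    apply: IH; first lia.
    move=> B BA; apply: (leq_trans (hH B (subset_trans BA AX))).
    apply: subset_leq_card; apply/subsetP => y; rewrite !inE => /andP[yY /existsP[x /andP[xB rxy]]].
    rewrite yY /=; apply/andP; split; last by apply/existsP; exists x; rewrite xB.
    by apply/existsP; exists x; rewrite (subsetP BA) .
  have [f2 [f2i f2p]] : exists f : T -> T, {in X :\: A &, injective f} /\
     (forall x, x \in X :\: A -> f x \in Y :\: NN Y A /\ r x (f x)).
    apply: IH.
      rewrite cardsDS //; have : 0 < #|A| by rewrite card_gt0. lia.
    move=> B BXA.
    have dBA : [disjoint B & A].
      rewrite disjoints_subset; apply/subsetP => x xB; have := subsetP BXA x xB.
      by rewrite !inE => /andP[].
    have h1 := hH (B :|: A).
    have : B :|: A \subset X.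
      by rewrite subUset AX andbT; apply: subset_trans BXA (subsetDl _ _).
    move=> /h1; rewrite cardsU (disjoint_setI0 dBA) cards0 subn0 => h2.
    have h3 := cardD_ge (NN Y (B :|: A)) (NN Y A).
    suff : NN Y (B :|: A) :\: NN Y A \subset NN (Y :\: NN Y A) B.
      move/subset_leq_card; lia.
    apply/subsetP => y; rewrite !inE => /andP [ynA /andP [yY /existsP [x /andP[xBA rxy]]]].
    rewrite ynA yY /=; apply/existsP; exists x; rewrite rxy andbT.
    move: xBA; rewrite !inE => /orP[//|xA].
    by case/negP: ynA; rewrite yY /=; apply/existsP; exists x; rewrite xA.
  exists (fun x => if x \in A then f1 x else f2 x); split.
    move=> x y xX yX /=.
    case: ifP => xA; case: ifP => yA.
    - exact: f1i.
    - have yXA : y \in X :\: A by rewrite inE yA.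
      move=> E; have := (f2p y yXA).1; rewrite -E inE (f1p x xA).1 //.
    - have xXA : x \in X :\: A by rewrite inE xA.
      move=> E; have := (f2p x xXA).1; rewrite E inE (f1p y yA).1 //.
    - by apply: f2i; rewrite inE ?xA ?yA.
  move=> x xX; case: ifP => xA.
    by have [/(subsetP (NN_sub _ _)) ? ?] := f1p x xA.
  have xXA : x \in X :\: A by rewrite inE xA.
  by have [/(subsetP (subsetDl _ _)) ? ?] := f2p x xXA.
move=> /existsPn hno.
case: (set_0Vmem X) => [->|[x xX]].
  by exists id; split => [a b|a]; rewrite inE.
have [y yN] : exists y, y \in NN Y [set x].
  apply/card_gt0P; apply: leq_trans (hH [set x] _); rewrite ?cards1 ?sub1set //.
have := yN; rewrite inE => /andP[yY /existsP[x' /andP[]]]; rewrite inE => /eqP -> rxy.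
have [f2 [f2i f2p]] : exists f : T -> T, {in X :\ x &, injective f} /\
     (forall z, z \in X :\ x -> f z \in Y :\ y /\ r z (f z)).
  apply: IH.
    move: hX; rewrite (cardsD1 x X) xX; lia.
  move=> B BX.
  case: (set_0Vmem B) => [->|[b bB]]; first by rewrite cards0.
  have BX' : B \subset X by apply: subset_trans BX (subsetDl _ _).
  have := hno B; rewrite BX' /= .
  have -> : B != set0 by apply/set0Pn; exists b.
  have -> : B != X.
    apply/eqP => E; have := subsetP BX x; rewrite E xX !inE eqxx => /(_ isT) //.
  rewrite /= -ltnNge => hlt.
  have : NN Y B :\ y \subset NN (Y :\ y) B.
    by apply/subsetP => z; rewrite !inE => /andP[-> /andP[-> ->]].
  move/subset_leq_card; have := cardsD1 y (NN Y B); lia.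
exists (fun z => if z == x then y else f2 z); split.
  move=> a b aX bX /=.
  case: eqP => ax; case: eqP => bx.
  - by rewrite ax bx.
  - have bXx : b \in X :\ x by rewrite !inE bX andbT; apply/eqP.
    move=> E; have := (f2p b bXx).1; rewrite -E !inE eqxx //.
  - have aXx : a \in X :\ x by rewrite !inE aX andbT; apply/eqP.
    move=> E; have := (f2p a aXx).1; rewrite E !inE eqxx //.
  - apply: f2i; rewrite !inE ?aX ?bX andbT; by apply/eqP.
move=> z zX; case: eqP => zx; first by rewrite zx.
have zXx : z \in X :\ x by rewrite !inE zX andbT; apply/eqP.
by have [/(subsetP (subsetDl _ _)) ? ?] := f2p z zXx.
Qed.
End HallS.
Section Main.
Variables (T : finType) (e : rel T) (e_sym : symmetric e) (e_irr : irreflexive e).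

Lemma from_f (U : {set T}) (f : T -> T) : {in U &, injective f} ->
  (forall x, x \in U -> f x \in U /\ e x (f x)) -> has_edge_odd_cycle_cover e U.
Proof.
move=> fi fU.
set g := fun x => if x \in U then f x else x.
have gi : injective g.
  move=> x y; rewrite /g; case: ifP => xU; case: ifP => yU.
  - exact: fi.
  - by move=> E; move: (fU x xU).1; rewrite E yU.
  - by move=> E; move: (fU y yU).1; rewrite -E xU.
  - by [].
apply: (@cover_perm _ e e_irr g gi #|U|) => // x xU.
by rewrite /g xU; exact: fU.
Qed.

Lemma weak_hall (U : {set T}) :
  (forall I : {set T}, I \subset U -> independent e I -> #|I| <= #|NN e U I|) ->
  has_edge_odd_cycle_cover e U.
Proof.
move=> hI.
have [f [fi fU]] : exists f : T -> T, {in U &, injective f} /\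
     (forall x, x \in U -> f x \in U /\ e x (f x)).
  apply: (@hall _ e #|U|) => // A AU.
  set A0 := [set x in A | [forall y in A, ~~ e x y]].
  have A0A : A0 \subset A by apply/subsetP => x; rewrite inE => /andP[].
  have iA0 : independent e A0.
    apply/forallP => x; apply/implyP; rewrite inE => /andP[_ /forallP hx].
    apply/forallP => y; apply/implyP; rewrite inE => /andP[yA _].
    exact: (implyP (hx y) yA).
  have h0 := hI A0 (subset_trans A0A AU) iA0.
  have s1 : NN e U A0 :|: (A :\: A0) \subset NN e U A.
    rewrite subUset; apply/andP; split.
      apply/subsetP => y; rewrite !inE => /andP[-> /existsP[x /andP[xA0 exy]]].
      by apply/existsP; exists x; rewrite exy (subsetP A0A).
    apply/subsetP => y; rewrite !inE => /andP[hy yA].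
    rewrite (subsetP AU) //=; move: hy; rewrite yA /= => /forallPn [z].
    rewrite negb_imply negbK => /andP[zA ezy]; apply/existsP; exists z.
    by rewrite zA e_sym.
  have dj : NN e U A0 :&: (A :\: A0) = set0.
    apply/setP => y; rewrite !inE; apply/negP => /andP[/andP[_ /existsP[x /andP[]]]].
    rewrite inE => /andP[_ /forallP hx] exy /andP[_ yA].
    by move: (implyP (hx y) yA); rewrite exy.
  have := subset_leq_card s1; rewrite cardsU dj cards0 subn0 cardsDS //.
  have := subset_leq_card A0A; lia.
by apply: from_f fi fU.
Qed.

End Main.

Theorem lemma2 (T : finType) (e : rel T) (e_sym : symmetric e) (e_irr : irreflexive e)
  (S : {set T}) (HS : is_special_S e S) :
  let R := ~: (S :|: nbhd e S) in
  (forall x, x \in R -> exists2 y, y \in R & e x y) ->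
  has_edge_odd_cycle_cover e R /\
  (forall x, x \in R -> has_edge_odd_cycle_cover e (R :\ x)).
Proof.
move=> R hR.
have [/andP [iS Siso] Smax] := HS.
have inR y : (y \in R) = (y \notin S) && (y \notin nbhd e S) by rewrite !inE negb_or.
have key : forall I : {set T}, I \subset R -> independent e I -> I != set0 ->
    #|I| < #|NN e R I|.
  move=> I IR iI I0; rewrite ltnNge; apply/negP => hle.
  set S' := S :|: I.
  have nS x y : x \in S -> y \in I -> e x y = false.
    move=> xS yI; apply/negP => exy; move: (subsetP IR y yI); rewrite inR.
    by rewrite inE; case/andP => _ /negP; apply; apply/existsP; exists x; rewrite xS.
  have adm : admissible e S'.
    apply/andP; split.
      apply/forallP => x; apply/implyP; rewrite inE => xS'.
      apply/forallP => y; apply/implyP; rewrite inE => yS'.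
      case/orP: xS' => [xS|xI]; case/orP: yS' => [yS|yI].
      - exact: (implyP (forallP (implyP (forallP iS x) xS) y) yS).
      - by rewrite nS.
      - by rewrite e_sym nS.
      - exact: (implyP (forallP (implyP (forallP iI x) xI) y) yI).
    apply/subsetP => x; rewrite inE => /orP[xS|xI]; first exact: (subsetP Siso).
    have [y _ exy] := hR x (subsetP IR x xI).
    rewrite !inE; apply/negP => /forallP /(_ y); by rewrite exy.
  have nsub : nbhd e S' \subset nbhd e S :|: NN e R I.
    apply/subsetP => y; rewrite !inE => /existsP[x /andP[]]; rewrite inE => /orP[xS|xI] exy.
      by apply/orP; left; apply/existsP; exists x; rewrite xS.
    case: (boolP (y \in nbhd e S)) => [|ynS]; first by rewrite inE => ->.
    apply/orP; right; apply/andP; split; last by apply/existsP; exists x; rewrite xI.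
    rewrite negb_or; apply/andP; split; last by move: ynS; rewrite inE.
    by apply/negP => yS; rewrite e_sym nS in exy.
  have cS' : #|S'| = #|S| + #|I|.
    rewrite cardsU; suff -> : S :&: I = set0 by rewrite cards0 subn0.
    apply/setP => x; rewrite !inE; apply/negP => /andP[xS xI].
    by move: (subsetP IR x xI); rewrite inR xS.
  have cN := subset_leq_card nsub.
  have cU : #|nbhd e S :|: NN e R I| <= #|nbhd e S| + #|NN e R I| by rewrite cardsU leq_subr.
  have [h1 h2] := Smax S' adm.
  have I0' : 0 < #|I| by rewrite card_gt0.
  have hsur : surplus e S' = surplus e S.
    move: h1; rewrite /surplus; lia.
  move: (h2 hsur); lia.
split.
  apply: weak_hall => // I IR iI.
  case: (set_0Vmem I) => [->|[a aI]]; first by rewrite cards0.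
  apply: ltnW; apply: key => //; apply/set0Pn; by exists a.
move=> x xR; apply: weak_hall => // I IR iI.
case: (set_0Vmem I) => [->|[a aI]]; first by rewrite cards0.
have IR' : I \subset R by apply: subset_trans IR (subsetDl _ _).
have k := key I IR' iI (introT (set0Pn _) (ex_intro _ a aI)).
have : NN e R I :\ x \subset NN e (R :\ x) I.
  by apply/subsetP => z; rewrite !inE => /andP[-> /andP[-> ->]].
move/subset_leq_card; have := cardsD1 x (NN e R I); lia.
Qed.
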